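(* Let $n$ be one of the integers for which $\mathbb{Z}[\xi_n]$ has class number one, $\mathcal{M}_n=\mathbb{Z}[\xi_n]$, and $I$ a principal ideal of $\mathcal{M}_n$ of finite index. Let $S$ be a $\varphi(n)\times\varphi(n)$ integer matrix whose columns form a generating set of the sublattice $L$ representing $I$, and let $B$ be the matrix representing $\phi_2$, both with respect to the basis $\{1,\xi_n,\dots,\xi_n^{\varphi(n)-1}\}$. For the Bravais coloring of $\mathcal{M}_n$ determined by $I$, the color symmetry group satisfies $H=T(G)\rtimes D_N$ if and only if $S^{-1}BS$ is an integral matrix.
   Context: Standing assumption: $n\in\{3,4,5,7,8,9,11,12,13,15,16,17,19,20,21,24,25,27,28,32,33,35,36,40,44,45,48,60,84\}$ (the values for which $\mathcal{M}_n=\mathbb{Z}[\xi_n]$, $\xi_n=\exp(2\pi i/n)$, is a principal ideal domain). Let $\varphi$ be Euler's function and $N=n$ if $n$ is even, $N=2n$ if $n$ is odd. Using the $\mathbb{Z}$-basis $\{1,\xi_n,\dots,\xi_n^{\varphi(n)-1}\}$ of $\mathcal{M}_n$, each element is identified with its integer coordinate vector, so $\mathcal{M}_n$ becomes a lattice $\Lambda=\mathbb{Z}^{\varphi(n)}\subset\mathbb{R}^{\varphi(n)}$, and a principal ideal $I$ of index $\ell$ becomes a sublattice $L\subseteq\Lambda$ of index $\ell$. Let $\phi_1$ be the linear map of $\mathbb{R}^{\varphi(n)}$ induced by multiplication by $\exp(2\pi i/N)$ (an $N$-fold rotation) and $\phi_2$ the linear map induced by complex conjugation (a reflection); they generate a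 group $D_N$, dihedral of order $2N$. Let $T(G)=\{t_y: x\mapsto x+y \mid y\in\Lambda\}$. The symmetry group of $\Lambda$ is $G=T(G)\rtimes D_N$. The Bravais coloring determined by $I$ assigns to each element of $\Lambda$ one of $\ell$ colors, two elements getting the same color iff they lie in the same coset of $L$ in $\Lambda$. The color symmetry group $H$ is the set of $g\in G$ that permute the colors, i.e. for every coset $x+L$ the image $g(x+L)$ is again a coset of $L$. *)

(* Defs.v *)
From HB Require Import structures.
From mathcomp Require Import all_boot all_order all_algebra all_field.
Unset Printing Implicit Defensive.
Import Order.TTheory GRing.Theory Num.Theory.
Local Open Scope ring_scope.

Definition class_number_one_list : seq nat :=
  [:: 3; 4; 5; 7; 8; 9; 11; 12; 13; 15; 16; 17; 19; 20; 21; 24; 25; 27; 28;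
      32; 33; 35; 36; 40; 44; 45; 48; 60; 84]%N.

(* xi k = exp(2 pi i / k): k.-root (-1) is the k-th root of -1 of minimal
   non-negative argument, i.e. exp(i pi / k) (for k > 1); its square is
   exp(2 pi i / k). *)
Definition xi (k : nat) : algC := (k.-root (-1)) ^+ 2.

Definition Ndih (n : nat) : nat := if odd n then (2 * n)%N else n.

Definition emb (n : nat) (v : 'cV[int]_(totient n)) : algC :=
  \sum_(i < totient n) (v i 0)%:~R * xi n ^+ i.

Definition embQ (n : nat) (v : 'cV[rat]_(totient n)) : algC :=
  \sum_(i < totient n) ratr (v i 0) * xi n ^+ i.

Definition inMn (n : nat) (z : algC) : Prop := exists v, z = emb n v.

Definition principal_ideal (n : nat) (I : algC -> Prop) : Prop :=
  exists a, inMn n a /\ forall z, I z <-> exists b, inMn n b /\ z = a * b.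

Definition inL (n : nat) (I : algC -> Prop) (v : 'cV[int]_(totient n)) : Prop :=
  I (emb n v).

Definition finite_index (n : nat) (I : algC -> Prop) : Prop :=
  exists s : seq 'cV[int]_(totient n),
    forall v, exists2 u, u \in s & inL n I (v - u).

(* the element t_y o phi_1^k o phi_2^b of G = T(G) x| D_N, acting on M_n *)
Definition gmap (n : nat) (k : nat) (b : bool) (y : algC) (x : algC) : algC :=
  xi (Ndih n) ^+ k * (if b then x^* else x) + y.

Definition inG (n : nat) (g : algC -> algC) : Prop :=
  exists k b y, inMn n y /\ forall x, inMn n x -> g x = gmap n k b y x.

Definition permutes_colors (n : nat) (I : algC -> Prop) (g : algC -> algC) : Prop :=
  forall x, inMn n x -> exists z, inMn n z /\
    forall w, (exists u, I u /\ w = g (x + u)) <-> (exists u, I u /\ w = z + u).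

Definition inH (n : nat) (I : algC -> Prop) (g : algC -> algC) : Prop :=
  inG n g /\ permutes_colors n I g.

Definition int2rat (x : int) : rat := x%:~R.

(* Main.v *)
Require Import Defs.
From HB Require Import structures.
From mathcomp Require Import all_boot all_order all_algebra all_field.
From mathcomp Require Import ring lra.
Import Order.TTheory GRing.Theory Num.Theory.
Local Open Scope ring_scope.

Definition mm {R : realFieldType} (x y : R) : R := if 0 <= y then 1 - x else 3 + x.

Lemma keyA {R : realFieldType} (a b x y : R) :
  a^+2 + b^+2 = 1 -> x^+2 + y^+2 = 1 -> 0 <= b -> a < 1 -> 0 <= y -> x <= a ->
  x < x * a + y * b.
Proof.
move=> hg hu hb ha hy hx.
have [hx0|hx0] := lerP x 0.
  have [hx1|hx1] := ltrP x 0; first nra.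
  have x0 : x = 0 by lra.
  subst x. have hb0 : 0 < b by nra. nra.
have ha0 : 0 < a by lra.
have h1 : b^+2 <= y^+2 by nra.
have hby : b <= y by nra.
have h2 : 2 * x^+2 < 1 + a by nra.
have h3 : (x * (1 - a))^+2 < (y*b)^+2 by nra.
nra.
Qed.

Lemma lemD {R : realFieldType} {a b x y : R} :
  a^+2 + b^+2 = 1 -> x^+2 + y^+2 = 1 -> 0 <= b -> a < 1 ->
  (x <= a \/ y < 0) ->
  mm (x * a + y * b) (y * a - x * b) < mm x y.
Proof.
move=> hg hu hb ha hxy; rewrite /mm.
have [hy|hy] := lerP 0 y.
  case: hxy => [hx|]; last by move=> h; exfalso; lra.
  have hk := keyA a b x y hg hu hb ha hy hx.
  have [hY|hY] := lerP 0 (y * a - x * b); first lra.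
  exfalso.
  have [ha0|ha0] := lerP 0 a.
    have [hx0|hx0] := lerP x 0.
      have : 0 <= y * a by apply: mulr_ge0.
      have : x * b <= 0 by apply: mulr_le0_ge0.
      lra.
    have hby : b <= y by nra.
    have : b * a <= y * a by apply: ler_wpM2r.
    have : x * b <= a * b by apply: ler_wpM2r.
    lra.
  have hby : y <= b by nra.
  have : (b - y) * a <= 0 by apply: mulr_ge0_le0; lra.
  have : x * b <= a * b by apply: ler_wpM2r.
  lra.
have hXY : (x * a + y * b)^+2 + (y * a - x * b)^+2 = 1.
  by rewrite -hu -[X in _ = X]mulr1 -hg; ring.
have hX : -1 <= x * a + y * b.
  move: hXY; set X := x * a + y * b; set Y := y * a - x * b => hXY.
  have : X^+2 <= 1 by have := sqr_ge0 Y; lra.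
  nra.
have hx1 : -1 < x.
  have hyy : 0 < y * y by nra.
  have : x^+2 < 1 by rewrite expr2; lra.
  nra.
have [hY|hY] := lerP 0 (y * a - x * b); first lra.
have [hx0|hx0] := lerP 0 x.
  have hb0 : 0 < b.
    rewrite lt_def hb andbT; apply/eqP => hb0; subst b.
    have : a = -1 by nra.
    move=> ha1; subst a; lra.
  have : 0 < - y * b by apply: mulr_gt0; lra.
  have : 0 <= x * (1 - a) by apply: mulr_ge0; lra.
  lra.
have ha0 : 0 < a.
  rewrite ltNge; apply/negP => ha0.
  have : 0 <= y * a by apply: mulr_le0; lra.
  have : x * b <= 0 by apply: mulr_le0_ge0; lra.
  lra.
have h1 : y * a * b <= x * b * b by apply: ler_wpM2r; lra.
have h2 : a * (x * a + y * b) <= x by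
  rewrite -[X in _ <= X]mulr1 -hg; move: h1; rewrite !expr2; lra.
have h3 : x < a * x by nra.
have h4 : a * (x * a + y * b) < a * x by lra.
rewrite ltrD2l; move: h4; rewrite ltr_pM2l //.
Qed.

Lemma lemE {R : realFieldType} (a b x y : R) :
  a^+2 + b^+2 = 1 -> x^+2 + y^+2 = 1 -> 0 <= b -> a < 1 ->
  [/\ (0 <= y -> x <= a -> 0 <= x * - b + a * y /\ x < x * a - y * - b),
      (y < 0 -> 0 <= x * - b + a * y -> 1 - (x * a - y * - b) < 3 + x)
    & (y < 0 -> x * - b + a * y < 0 -> x * a - y * - b < x)].
Proof.
move=> hg hu hb ha.
have hXY : (x * a + y * b)^+2 + (y * a - x * b)^+2 = 1.
  by rewrite -hu -[X in _ = X]mulr1 -hg; ring.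
have hX : -1 <= x * a + y * b.
  move: hXY; set X := x * a + y * b; set Y := y * a - x * b => hXY.
  have : X^+2 <= 1 by have := sqr_ge0 Y; lra.
  nra.
have hx : -1 <= x by nra.
have hx' : x <= 1 by nra.
have E1 : x * a - y * - b = x * a + y * b by ring.
have E2 : x * - b + a * y = y * a - x * b by ring.
rewrite E1 E2.
split.
- move=> hy hxa.
  have := lemD hg hu hb ha (or_introl hxa); rewrite /mm hy.
  have [hY|hY] := lerP 0 (y * a - x * b); lra.
- move=> hy hY.
  have := lemD hg hu hb ha (or_intror hy); rewrite /mm hY.
  by have -> : (0 <= y) = false by apply/negbTE; rewrite -ltNge.
- move=> hy hY.
  have := lemD hg hu hb ha (or_intror hy); rewrite /mm.
  have -> : (0 <= y) = false by apply/negbTE; rewrite -ltNge.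
  have -> : (0 <= y * a - x * b) = false by apply/negbTE; rewrite -ltNge.
  lra.
Qed.

Definition mmC (u : algC) : algC := if 0 <= 'Im u then 1 - 'Re u else 3 + 'Re u.

Lemma lemDC {g u : algC} : `|g| = 1 -> `|u| = 1 -> 0 <= 'Im g -> 'Re g < 1 ->
  ('Re u <= 'Re g \/ 'Im u < 0) -> mmC (u * g^*) < mmC u.
Proof.
move=> ng nu hb ha hxy.
have hg : 'Re g ^+2 + 'Im g ^+2 = 1 by rewrite -normC2_Re_Im ng expr1n.
have hu : 'Re u ^+2 + 'Im u ^+2 = 1 by rewrite -normC2_Re_Im nu expr1n.
pose a := in_algR (Creal_Re g); pose b := in_algR (Creal_Im g).
pose x := in_algR (Creal_Re u); pose y := in_algR (Creal_Im u).
have hg' : a^+2 + b^+2 = 1.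
  by apply: val_inj => /=; rewrite -!expr2.
have hu' : x^+2 + y^+2 = 1.
  by apply: val_inj => /=; rewrite -!expr2.
have [E1 E2 E3] := lemE a b x y hg' hu' hb ha.
rewrite /mmC ReM ImM Re_conj Im_conj.
have [hy|hy] := lerP 0 y.
  have hy' : 0 <= 'Im u := hy.
  rewrite hy'.
  case: hxy => [hxa|hlt]; last by move: (le_lt_trans hy' hlt); rewrite ltxx.
  have [h1 h2] := E1 hy hxa.
  have h1' : 0 <= 'Re u * - 'Im g + 'Re g * 'Im u := h1.
  rewrite h1'.
  have h2' : 'Re u < 'Re u * 'Re g - 'Im u * - 'Im g := h2.
  by rewrite ltrD2l ltrN2.
have hy' : (0 <= 'Im u) = false := lt_geF hy.
rewrite hy'.
have [hY|hY] := lerP 0 (x * - b + a * y).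
  have hY' : 0 <= 'Re u * - 'Im g + 'Re g * 'Im u := hY.
  rewrite hY'. exact: (E2 hy hY).
have hY' : (0 <= 'Re u * - 'Im g + 'Re g * 'Im u) = false := lt_geF hY.
rewrite hY' ltrD2l; exact: (E3 hy hY).
Qed.

Lemma lemF {R : realFieldType} {a b : R} : a^+2 + b^+2 = 1 -> 1 <= a -> a = 1 /\ b = 0.
Proof. move=> h ha; split; nra. Qed.

Lemma Re_lt1 {g : algC} : `|g| = 1 -> g != 1 -> 'Re g < 1.
Proof.
move=> ng g1.
have hg : 'Re g ^+2 + 'Im g ^+2 = 1 by rewrite -normC2_Re_Im ng expr1n.
pose a := in_algR (Creal_Re g); pose b := in_algR (Creal_Im g).
have hg' : a^+2 + b^+2 = 1 by apply: val_inj => /=; rewrite -!expr2.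
have [//|ha] := ltP a 1.
have [ha1 hb0] := lemF hg' ha.
have E1 : 'Re g = 1 by move: ha1 => /(congr1 val).
have E2 : 'Im g = 0 by move: hb0 => /(congr1 val).
by move: g1; rewrite [g]Crect E1 E2 mulr0 addr0 eqxx.
Qed.

Lemma norm_unity {u : algC} {N : nat} : (0 < N)%N -> u ^+ N = 1 -> `|u| = 1.
Proof.
move=> N0 hu; apply/eqP; rewrite -(pexpr_eq1 N0) ?normr_ge0 //.
by rewrite -normrX hu normr1.
Qed.

Lemma seq_maxRe (s : seq algC) x0 : x0 \in s ->
  exists2 g, g \in s & forall u, u \in s -> 'Re u <= 'Re g.
Proof.
elim: s x0 => // a s IH x0 _.
case: s IH => [|b s] IH.
  by exists a => [|u]; rewrite ?inE ?eqxx // => /eqP->.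
have [g gs gmax] := IH b (mem_head _ _).
have [hag|hag] := real_leP (Creal_Re a) (Creal_Re g).
  exists g; first by rewrite inE gs orbT.
  by move=> u; rewrite inE => /predU1P[->|/gmax].
exists a; first exact: mem_head.
move=> u; rewrite inE => /predU1P[->//|/gmax hu].
exact: le_trans hu (ltW hag).
Qed.

Lemma max_root {N : nat} : (1 < N)%N -> exists g : algC,
  [/\ g ^+ N = 1, g != 1, 0 <= 'Im g &
      forall u, u ^+ N = 1 -> u != 1 -> 'Re u <= 'Re g].
Proof.
move=> N1; have N0 : (0 < N)%N by apply: ltnW.
have [z0 pz0] := C_prim_root_exists N0.
pose s := [seq z0 ^+ k | k <- iota 1 N.-1].
have z0s : z0 \in s.
  apply/mapP; exists 1%N; rewrite ?expr1 // mem_iota leqnn /= add1n.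
  by rewrite prednK.
have [g gs gmax] := seq_maxRe _ _ z0s.
have sP u : u ^+ N = 1 -> u != 1 -> u \in s.
  move=> hu u1; case: (prim_rootP pz0 hu) => i hi; rewrite hi in u1 *.
  apply/mapP; exists (nat_of_ord i) => //.
  rewrite mem_iota add1n prednK //= ltn_ord andbT lt0n.
  by apply: contraNneq u1 => ->; rewrite expr0.
have [gN g1] : g ^+ N = 1 /\ g != 1.
  move: gs => /mapP[k]; rewrite mem_iota add1n prednK // => /andP[k1 kN] ->.
  split; first by rewrite exprAC (prim_expr_order pz0) expr1n.
  by rewrite -(prim_order_dvd pz0); apply/negP => /(dvdn_leq k1); rewrite leqNgt kN.
have gmax' u : u ^+ N = 1 -> u != 1 -> 'Re u <= 'Re g.
  by move=> hu u1; apply: gmax; apply: sP.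
have [hI|hI] := real_leP (real0 _) (Creal_Im g).
  by exists g; split.
exists g^*; split.
- by rewrite -rmorphXn gN rmorph1.
- by apply: contra g1 => /eqP h; rewrite -[g]conjCK h rmorph1.
- by rewrite Im_conj oppr_ge0 ltW.
- by move=> u hu u1; rewrite Re_conj; apply: gmax'.
Qed.

Lemma gen_root {N : nat} {g : algC} : (1 < N)%N -> g ^+ N = 1 -> g != 1 ->
  0 <= 'Im g -> (forall u, u ^+ N = 1 -> u != 1 -> 'Re u <= 'Re g) ->
  forall h, h ^+ N = 1 -> exists j, h = g ^+ j.
Proof.
move=> N1 gN g1 hI gmax h hN; have N0 : (0 < N)%N by apply: ltnW.
have ng := norm_unity N0 gN.
have gc : g^* * g = 1 by rewrite mulrC -normCK ng expr1n.
pose s j := h * g^* ^+ j.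
have gcN : g^* ^+ N = 1 by rewrite -rmorphXn gN rmorph1.
have sN j : s j ^+ N = 1 by rewrite /s exprMn hN mul1r exprAC gcN expr1n.
have ns j : `|s j| = 1 := norm_unity N0 (sN j).
have hRe := Re_lt1 ng g1.
have [/existsP[j hj]|none] := boolP [exists j : 'I_N.+1, 'Re g < 'Re (s j)].
  have sj1 : s j = 1.
    apply/eqP; apply: contraTT hj => sj1.
    by rewrite -real_leNgt ?Creal_Re //; exact: gmax (sN j) sj1.
  exists j; rewrite -[h]mulr1 -(expr1n _ j) -gc exprMn mulrA.
  by rewrite -/(s j) sj1 mul1r.
have le_s (k : nat) : (k < N.+1)%N -> 'Re (s k) <= 'Re g.
  move=> kN; move/existsPn: none => /(_ (Ordinal kN)) /=.
  by rewrite -real_leNgt ?Creal_Re.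
have step k : (k < N.+1)%N -> mmC (s k.+1) < mmC (s k).
  move=> kN; have := lemDC ng (ns k) hI hRe (or_introl (le_s k kN)).
  by rewrite /s exprSr mulrA.
have chain k : (0 < k)%N -> (k < N.+1)%N -> mmC (s k) < mmC (s 0).
  elim: k => // k IH _ kN.
  have kN' : (k < N.+1)%N by apply: ltnW.
  case: k IH kN kN' => [|k] IH kN kN'; first exact: step.
  exact: lt_trans (step _ kN') (IH isT kN').
have := chain N N0 (ltnSn N).
by rewrite /s gcN expr0 ltxx.
Qed.

Lemma prim_of_max {N : nat} {g : algC} : (1 < N)%N -> g ^+ N = 1 -> g != 1 ->
  0 <= 'Im g -> (forall u, u ^+ N = 1 -> u != 1 -> 'Re u <= 'Re g) ->
  N.-primitive_root g.
Proof.
move=> N1 gN g1 hI gmax; have N0 : (0 < N)%N by apply: ltnW.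
have [z0 pz0] := C_prim_root_exists N0.
have [j hj] := gen_root N1 gN g1 hI gmax _ (prim_expr_order pz0).
have [m pm mN] := prim_order_exists N0 gN.
have Nm : (N %| m)%N.
  by rewrite (prim_order_dvd pz0) hj exprAC (prim_expr_order pm) expr1n.
have -> : N = m by apply/eqP; rewrite eqn_dvd Nm mN.
exact: pm.
Qed.

Lemma rootN1_prim {n : nat} : (1 < n)%N -> (2 * n).-primitive_root (n.-root (-1 : algC)).
Proof.
move=> n1; have n0 : (0 < n)%N by apply: ltnW.
have N1 : (1 < 2 * n)%N by rewrite (leq_trans n1) // leq_pmull.
have [g [gN g1 hI gmax]] := max_root N1.
have pg := prim_of_max N1 gN g1 hI gmax.
have gn : g ^+ n = -1.
  have : (g ^+ n) ^+ 2 == 1 by rewrite -exprM mulnC gN.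
  rewrite sqrf_eq1 => /orP[/eqP|/eqP//].
  move/eqP; rewrite -(prim_order_dvd pg) => /(dvdn_leq n0).
  by rewrite leqNgt -{1}[n]mul1n ltn_pmul2r // ltnSn.
set w := n.-root (-1).
have wn : w ^+ n = -1 by rewrite /w rootCK.
have n11 : (-1 : algC) != 1 by rewrite lt_eqF // (lt_trans (ltrN10 _) ltr01).
have w2n : w ^+ (2 * n) = 1 by rewrite mulnC exprM wn sqrrN expr1n.
have w1 : w != 1 by apply: contra n11 => /eqP w1; rewrite -wn w1 expr1n.
have hRe1 : 'Re g <= 'Re w := rootC_Re_max n0 gn hI.
have hRe2 : 'Re w <= 'Re g := gmax w w2n w1.
have hRe : 'Re w = 'Re g by apply/le_anti; rewrite hRe1 hRe2.
have hIw : 0 <= 'Im w := Im_rootC_ge0 _ n1.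
have ng : `|g| = 1 := norm_unity (ltnW N1) gN.
have nw : `|w| = 1 := norm_unity (ltnW N1) w2n.
have hIm : 'Im w = 'Im g.
  have : 'Im w ^+ 2 = 'Im g ^+ 2.
    by apply: (addrI ('Re w ^+ 2)); rewrite -normC2_Re_Im hRe -normC2_Re_Im nw ng.
  by move/eqP; rewrite eqrXn2 // => /eqP.
have -> : w = g by rewrite [w]Crect [g]Crect hRe hIm.
exact: pg.
Qed.

Lemma xi_prim {n : nat} : (1 < n)%N -> n.-primitive_root (xi n).
Proof.
move=> n1; have := exp_prim_root (rootN1_prim n1) 2.
have -> : gcdn 2 (2 * n) = 2%N by apply/gcdn_idPl; apply: dvdn_mulr.
by rewrite mulKn.
Qed.

Definition ev (n : nat) (p : {poly int}) : algC := (map_poly intr p).[xi n].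

Lemma evD n p q : ev n (p + q) = ev n p + ev n q.
Proof. by rewrite /ev rmorphD hornerD. Qed.
Lemma evM n p q : ev n (p * q) = ev n p * ev n q.
Proof. by rewrite /ev rmorphM hornerM. Qed.
Lemma evN n p : ev n (- p) = - ev n p.
Proof. by rewrite /ev rmorphN hornerN. Qed.
Lemma ev0 n : ev n 0 = 0.
Proof. by rewrite /ev rmorph0 horner0. Qed.
Lemma ev1 n : ev n 1 = 1.
Proof. by rewrite /ev rmorph1 hornerC. Qed.
Lemma evX n : ev n 'X = xi n.
Proof. by rewrite /ev map_polyX hornerX. Qed.
Lemma evXn n k : ev n ('X^k) = xi n ^+ k.
Proof. by rewrite /ev map_polyXn hornerXn. Qed.

Lemma Phi_root n : (1 < n)%N -> ev n 'Phi_n = 0.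
Proof.
move=> n1; apply/eqP; rewrite /ev -/(root _ _) (Cintr_Cyclotomic (xi_prim n1)).
by rewrite (root_cyclotomic (xi_prim n1)) xi_prim.
Qed.

Definition polv {n} (v : 'cV[int]_(totient n)) : {poly int} :=
  \sum_(i < totient n) (v i 0)%:P * 'X^i.

Lemma emb_ev n (v : 'cV[int]_(totient n)) : emb n v = ev n (polv v).
Proof.
rewrite /ev /polv rmorph_sum horner_sum; apply: eq_bigr => i _.
by rewrite rmorphM /= map_polyC map_polyXn hornerCM hornerXn.
Qed.

Lemma ev_emb n p : (1 < n)%N -> exists v, ev n p = emb n v.
Proof.
move=> n1; have mon := Cyclotomic_monic n.
have Ep := Pdiv.IdomainMonic.divp_eq mon p.
set r := p %% 'Phi_n in Ep.
have sr : (size r <= totient n)%N.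
  by rewrite -ltnS -size_Cyclotomic ltn_modp monic_neq0.
exists (\col_(i < totient n) r`_i).
rewrite Ep evD evM Phi_root // mulr0 add0r /emb /ev.
rewrite (@horner_coef_wide _ (totient n)); last first.
  by rewrite size_map_inj_poly //; exact: intr_inj.
by apply: eq_bigr => i _; rewrite coef_map mxE.
Qed.

Definition Mn (n : nat) (z : algC) : Prop := exists p, z = ev n p.

Lemma inMnE n z : (1 < n)%N -> inMn n z <-> Mn n z.
Proof.
move=> n1; split.
  by move=> [v ->]; exists (polv v); rewrite emb_ev.
by move=> [p ->]; have [v ->] := ev_emb n p n1; exists v.
Qed.

Lemma MnD n x y : Mn n x -> Mn n y -> Mn n (x + y).
Proof. by move=> [p ->] [q ->]; exists (p + q); rewrite evD. Qed.
Lemma MnM n x y : Mn n x -> Mn n y -> Mn n (x * y).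
Proof. by move=> [p ->] [q ->]; exists (p * q); rewrite evM. Qed.
Lemma MnN n x : Mn n x -> Mn n (- x).
Proof. by move=> [p ->]; exists (- p); rewrite evN. Qed.
Lemma Mn0 n : Mn n 0.
Proof. by exists 0; rewrite ev0. Qed.
Lemma Mn1 n : Mn n 1.
Proof. by exists 1; rewrite ev1. Qed.
Lemma MnXi n k : Mn n (xi n ^+ k).
Proof. by exists 'X^k; rewrite evXn. Qed.
Lemma MnX n x k : Mn n x -> Mn n (x ^+ k).
Proof.
move=> hx; elim: k => [|k IH]; first by rewrite expr0; apply: Mn1.
by rewrite exprS; apply: MnM.
Qed.

Lemma MnJ n x : (1 < n)%N -> Mn n x -> Mn n x^*.
Proof.
move=> n1 [p ->]; have pr := xi_prim n1.
have n0 : (0 < n)%N by apply: ltnW.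
have xn : xi n ^+ n = 1 := prim_expr_order pr.
have nx : `|xi n| = 1 := norm_unity n0 xn.
have xc : (xi n)^* = xi n ^+ n.-1.
  apply: (mulfI (x := xi n)); first by rewrite -normr_eq0 nx oner_eq0.
  by rewrite -normCK nx expr1n -exprS prednK.
exists (p \Po 'X^(n.-1)).
rewrite /ev map_comp_poly map_polyXn horner_comp hornerXn -xc.
rewrite -horner_map /=; congr (_.[_]).
by rewrite -map_poly_comp; apply: eq_map_poly => z /=; rewrite rmorph_int.
Qed.

Lemma embQ_int n (v : 'cV[int]_(totient n)) : embQ n (map_mx int2rat v) = emb n v.
Proof. by apply: eq_bigr => i _; rewrite mxE /int2rat ratr_int. Qed.

Section PolQ.
Variable m : nat.
Variable c : 'I_m -> rat.
Definition pq : {poly rat} := \sum_(i < m) (c i)%:P * 'X^i.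

Lemma pq_coef (i : 'I_m) : pq`_i = c i.
Proof.
rewrite /pq coef_sum (bigD1 i) //= coefCM coefXn eqxx mulr1 big1 ?addr0 //.
move=> j ji; rewrite coefCM coefXn.
have -> : (nat_of_ord i == nat_of_ord j) = false.
  by apply/negbTE; rewrite eq_sym; exact: ji.
by rewrite mulr0.
Qed.

Lemma pq_size : (size pq <= m)%N.
Proof.
apply/leq_sizeP => k km; rewrite /pq coef_sum big1 // => j _.
rewrite coefCM coefXn.
have -> : (k == nat_of_ord j) = false.
  by apply/negbTE; rewrite neq_ltn (leq_trans (ltn_ord j) km) orbT.
by rewrite mulr0.
Qed.
End PolQ.

Lemma embQ_inj n (v w : 'cV[rat]_(totient n)) : (1 < n)%N ->
  embQ n v = embQ n w -> v = w.
Proof.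
move=> n1 hvw.
pose c (i : 'I_(totient n)) := v i 0 - w i 0.
have hq : root (map_poly ratr (pq _ c)) (xi n).
  rewrite /root /pq rmorph_sum horner_sum.
  rewrite (eq_bigr (fun i => ratr (v i 0) * xi n ^+ i - ratr (w i 0) * xi n ^+ i)).
    by rewrite sumrB -/(embQ n v) -/(embQ n w) hvw subrr.
  move=> i _; rewrite rmorphM /= map_polyC map_polyXn hornerCM hornerXn.
  by rewrite /c -mulrBl; congr (_ * _); exact: raddfB.
have [p0 [Dp mon] dv] := minCpolyP (xi n).
have sp0 : size p0 = (totient n).+1.
  rewrite -(size_map_poly (@ratr algC)) -Dp.
  by rewrite (minCpoly_cyclotomic (xi_prim n1)) size_cyclotomic.
have q0 : pq _ c = 0.
  apply/eqP; apply/negPn/negP => nz.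
  rewrite dv in hq.
  have := dvdp_leq nz hq; rewrite sp0 => /leq_trans /(_ (pq_size _ c)).
  by rewrite ltnn.
apply/matrixP => i j; rewrite (ord1 j).
apply/eqP; rewrite -subr_eq0; apply/eqP.
by have := pq_coef _ c i; rewrite q0 coef0.
Qed.

Lemma mapM m p k (A : 'M[int]_(m, p)) (B : 'M[int]_(p, k)) :
  map_mx int2rat (A *m B) = map_mx int2rat A *m map_mx int2rat B.
Proof. exact: map_mxM. Qed.

Lemma mapZ m p (a : int) (A : 'M[int]_(m, p)) :
  map_mx int2rat (a *: A) = int2rat a *: map_mx int2rat A.
Proof. by apply/matrixP => i j; rewrite !mxE /int2rat intrM. Qed.

Lemma mulE {R : pzSemiRingType} {m p} (M : 'M[R]_(m, p)) i j :
  (M *m delta_mx j (0 : 'I_1)) i 0 = M i j.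
Proof. by rewrite -colE mxE. Qed.

Lemma S_unit n (I : algC -> Prop) (S : 'M[int]_(totient n)) :
  finite_index n I ->
  (forall v : 'cV[int]_(totient n),
     inL n I v <-> exists c : 'cV[int]_(totient n), v = S *m c) ->
  map_mx int2rat S \in unitmx.
Proof.
move=> [s hs] hS.
pose e (j : 'I_(totient n)) : 'cV[int]_(totient n) := delta_mx j 0.
have hcol j : exists dc : int * 'cV[int]_(totient n),
    dc.1 != 0 /\ dc.1 *: e j = S *m dc.2.
  have hk (k : 'I_(size s).+1) : exists u, u \in s /\ inL n I ((k%:Z) *: e j - u).
    by have [u us hu] := hs ((k%:Z) *: e j); exists u.
  have [u hu] := fin_all_exists hk.
  have hidx k : (index (u k) s < size s)%N by rewrite index_mem; case: (hu k).
  pose f (k : 'I_(size s).+1) : 'I_(size s) := Ordinal (hidx k).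
  have : ~~ injectiveb f.
    apply/negP => /injectiveP inj; have := leq_card f inj.
    by rewrite !card_ord ltnn.
  move/injectivePn => [k1 [k2 k12 fk]].
  have ue : u k1 = u k2.
    have := congr1 val fk => /= hi.
    by rewrite -(nth_index 0 (hu k1).1) hi (nth_index 0 (hu k2).1).
  have [c1 hc1] := (hS _).1 (hu k1).2.
  have [c2 hc2] := (hS _).1 (hu k2).2.
  exists ((k1%:Z - k2%:Z), c1 - c2); split => /=.
    rewrite subr_eq0; apply: contra k12 => /eqP h; apply/eqP/val_inj => /=.
    by case: h.
  by rewrite mulmxBr -hc1 -hc2 ue opprB addrA subrK scalerBl.
have [dc hdc] := fin_all_exists hcol.
pose C : 'M[rat]_(totient n) :=
  \matrix_(i, j) ((int2rat (dc j).1)^-1 * int2rat ((dc j).2 i 0)).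
suff : map_mx int2rat S *m C = 1%:M by case/mulmx1_unit.
apply/matrixP => i j.
have key : map_mx int2rat S *m map_mx int2rat (dc j).2 =
    int2rat (dc j).1 *: delta_mx j 0.
  rewrite -mapM -(hdc j).2 mapZ; congr (_ *: _).
  by apply/matrixP => a b; rewrite !mxE /int2rat; case: (_ && _).
have dnz : int2rat (dc j).1 != 0 by rewrite /int2rat intr_eq0 (hdc j).1.
have := congr1 (fun M : 'cV[rat]_(totient n) => M i 0) key.
rewrite !mxE => hk.
rewrite (eq_bigr (fun k => (int2rat (dc j).1)^-1 *
   (map_mx int2rat S i k * map_mx int2rat (dc j).2 k 0))); last first.
  by move=> k _; rewrite !mxE mulrCA.
rewrite -mulr_sumr.
have -> : \sum_k map_mx int2rat S i k * map_mx int2rat (dc j).2 k 0 =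
   int2rat (dc j).1 * ((i == j) && (0 == 0 :> 'I_1))%:R.
  by rewrite -hk; apply: eq_bigr => k _; rewrite !mxE.
by rewrite mulrA mulVf // mul1r eqxx andbT.
Qed.

Lemma Iprops n (I : algC -> Prop) : (1 < n)%N -> principal_ideal n I ->
  [/\ forall z, I z -> Mn n z, I 0,
      forall x y, I x -> I y -> I (x + y),
      forall x, I x -> I (- x)
    & forall m x, Mn n m -> I x -> I (m * x)].
Proof.
move=> n1 [a [ha hI]]; have ha' := (inMnE n a n1).1 ha.
split.
- by move=> z /hI [b [hb ->]]; apply: MnM => //; apply/(inMnE _ _ n1).
- by apply/hI; exists 0; rewrite mulr0; split => //; apply/(inMnE _ _ n1); apply: Mn0.
- move=> x y /hI [b [hb ->]] /hI [c [hc ->]]; apply/hI; exists (b + c).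
  split; last by rewrite mulrDr.
  by apply/(inMnE _ _ n1); apply: MnD; apply/(inMnE _ _ n1).
- move=> x /hI [b [hb ->]]; apply/hI; exists (- b).
  split; last by rewrite mulrN.
  by apply/(inMnE _ _ n1); apply: MnN; apply/(inMnE _ _ n1).
- move=> m x hm /hI [b [hb ->]]; apply/hI; exists (m * b).
  split; last by rewrite mulrCA.
  by apply/(inMnE _ _ n1); apply: MnM => //; apply/(inMnE _ _ n1).
Qed.

Lemma zeta_props n : (1 < n)%N ->
  [/\ Mn n (xi (Ndih n)), xi (Ndih n) ^+ (Ndih n) = 1 & (0 < Ndih n)%N].
Proof.
move=> n1; have n0 : (0 < n)%N by apply: ltnW.
have N0 : (0 < Ndih n)%N by rewrite /Ndih; case: ifP => //; rewrite muln_gt0.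
have rN : (Ndih n).-root (-1 : algC) ^+ (Ndih n) = -1 by rewrite rootCK.
split => //; last by rewrite /xi exprAC rN sqrrN expr1n.
move: rN; rewrite /xi /Ndih; case: ifP => hodd rN; last first.
  by rewrite -[X in Mn _ X]expr1; apply: MnXi.
have hn : (- ((2 * n).-root (-1 : algC) ^+ 2)) ^+ n = 1.
  rewrite exprNn -signr_odd hodd expr1 -exprM rN mulN1r opprK //.
have [i hi] := prim_rootP (xi_prim n1) hn.
rewrite -[X in Mn _ X]opprK hi; apply: MnN; apply: MnXi.
Qed.

Lemma CI_RHS n (I : algC -> Prop) (S : 'M[int]_(totient n))
    (B : 'M[rat]_(totient n)) : (1 < n)%N ->
  (forall z, I z -> Mn n z) ->
  map_mx int2rat S \in unitmx ->
  (forall v : 'cV[int]_(totient n),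
     inL n I v <-> exists c : 'cV[int]_(totient n), v = S *m c) ->
  (forall v : 'cV[int]_(totient n),
     embQ n (B *m map_mx int2rat v) = (emb n v)^*) ->
  (forall z, I z -> I z^*) <->
  exists T : 'M[int]_(totient n),
     map_mx int2rat T = invmx (map_mx int2rat S) *m B *m map_mx int2rat S.
Proof.
move=> n1 IM Su hS hB.
set Sq := map_mx int2rat S.
split.
  move=> CI.
  have hc j : exists c : 'cV[int]_(totient n),
      B *m map_mx int2rat (S *m delta_mx j 0) = Sq *m map_mx int2rat c.
    have hL : I (emb n (S *m delta_mx j 0)).
      by apply/(hS _).2; exists (delta_mx j 0).
    have /IM /(inMnE _ _ n1) [w hw] := CI _ hL.
    have [c hc] : exists c, w = S *m c by apply/(hS w).1; rewrite /inL -hw; exact: CI.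
    exists c; apply: (embQ_inj _ _ _ n1); rewrite hB -mapM -hc embQ_int; exact: hw.
  have [c hcj] := fin_all_exists hc.
  exists (\matrix_(i, j) (c j) i 0).
  rewrite -mulmxA; apply: (canRL (mulKmx Su)).
  apply/matrixP => i j.
  rewrite -(mulE (Sq *m _) i j) -(mulE (B *m Sq) i j) -!mulmxA.
  have -> : map_mx int2rat (\matrix_(i0, j0) c j0 i0 0) *m delta_mx j 0 =
            map_mx int2rat (c j).
    apply/matrixP => a b; rewrite (ord1 b) mulE !mxE //.
  rewrite -hcj mapM; congr ((_ *m (_ *m _)) i 0).
  by apply/matrixP => a b; rewrite !mxE /int2rat; case: (_ && _).
move=> [T hT] z hz.
have hT' : Sq *m map_mx int2rat T = B *m Sq.
  by rewrite hT !mulmxA mulmxV // mul1mx.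
have /(inMnE _ _ n1) [v hv] := IM _ hz.
have [c hc] : exists c, v = S *m c by apply/(hS v).1; rewrite /inL -hv.
have hL : inL n I (S *m (T *m c)) by apply/(hS _).2; exists (T *m c).
suff -> : z^* = emb n (S *m (T *m c)) by exact: hL.
by rewrite -embQ_int !mapM mulmxA hT' -mulmxA -mapM -hc hB -hv.
Qed.

Lemma CI_LHS n (I : algC -> Prop) : (1 < n)%N -> principal_ideal n I ->
  (forall g, inH n I g <-> inG n g) <-> (forall z, I z -> I z^*).
Proof.
move=> n1 hP.
have [IM I0 ID IN IMul] := Iprops n I n1 hP.
have [Mz zK K0] := zeta_props n n1.
set zeta := xi (Ndih n) in Mz zK.
have toM z : inMn n z -> Mn n z by move/(inMnE _ _ n1).
have ofM z : Mn n z -> inMn n z by move/(inMnE _ _ n1).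
split.
  move=> hH z hz.
  have hG : inG n (fun x => x^*).
    exists 0%N, true, 0; split; first by apply: ofM; apply: Mn0.
    by move=> x _; rewrite /gmap expr0 mul1r addr0.
  have [_ hpc] := (hH _).2 hG.
  have [w [_ hw]] := hpc 0 (ofM _ (Mn0 n)).
  have [u0 [hu0 e0]] : exists u, I u /\ 0 = w + u.
    by apply: (hw 0).1; exists 0; split => //; rewrite addr0 conjC0.
  have [u1 [hu1 e1]] : exists u, I u /\ z^* = w + u.
    by apply: (hw z^*).1; exists z; split => //; rewrite add0r.
  have hw0 : w = - u0 by apply/eqP; rewrite -addr_eq0 -e0.
  have -> : z^* = u1 - u0 by rewrite e1 hw0 addrC.
  by apply: ID => //; apply: IN.
move=> CI g; split; first by case.
move=> hG; split => //.
have [k [b [y [hy hg]]]] := hG.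
pose cb (x : algC) := if b then x^* else x.
have cbD x1 x2 : cb (x1 + x2) = cb x1 + cb x2 by rewrite /cb; case: (b) => //; rewrite rmorphD.
have cbM x1 x2 : cb (x1 * x2) = cb x1 * cb x2 by rewrite /cb; case: (b) => //; rewrite rmorphM.
have cbK x : cb (cb x) = x by rewrite /cb; case: (b) => //; rewrite conjCK.
have cbMn x : Mn n x -> Mn n (cb x) by rewrite /cb; case: (b) => // /(MnJ n x n1).
have cbI x : I x -> I (cb x) by rewrite /cb; case: (b) => // /CI.
have gE x : inMn n x -> g x = zeta ^+ k * cb x + y by move=> hx; rewrite hg.
move=> x hx; exists (zeta ^+ k * cb x + y); split.
  apply: ofM; apply: MnD; last exact: toM.
  by apply: MnM; [apply: MnX | apply: cbMn; apply: toM].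
move=> w; split.
  move=> [u [hu ->]].
  have hxu : inMn n (x + u) by apply: ofM; apply: MnD; [exact: toM | exact: IM].
  exists (zeta ^+ k * cb u); split; first by apply: IMul; [apply: MnX | apply: cbI].
  by rewrite gE // cbD mulrDr addrAC.
move=> [u [hu ->]].
pose u' := cb (zeta ^+ (k * (Ndih n).-1) * u).
have hu' : I u' by apply: cbI; apply: IMul => //; apply: MnX.
exists u'; split => //.
have hxu : inMn n (x + u') by apply: ofM; apply: MnD; [exact: toM | exact: IM].
rewrite gE // cbD cbK mulrDr mulrA -exprD -[X in (X + _)%N]muln1 -mulnDr.
by rewrite add1n prednK // mulnC exprM zK expr1n mul1r addrAC.
Qed.

Theorem corollary3p1p3 (n : nat) (I : algC -> Prop)
    (S : 'M[int]_(totient n)) (B : 'M[rat]_(totient n)) :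
  n \in class_number_one_list ->
  principal_ideal n I ->
  finite_index n I ->
  (* the columns of S generate L *)
  (forall v : 'cV[int]_(totient n),
     inL n I v <-> exists c : 'cV[int]_(totient n), v = S *m c) ->
  (* B is the matrix of phi_2 (complex conjugation) in the basis 1, xi, ... *)
  (forall v : 'cV[int]_(totient n),
     embQ n (B *m map_mx int2rat v) = (emb n v)^*) ->
  ((forall g, inH n I g <-> inG n g) <->
   exists T : 'M[int]_(totient n),
     map_mx int2rat T = invmx (map_mx int2rat S) *m B *m map_mx int2rat S).
Proof.
move=> hn hP hF hS hB.
have hall : all (fun k => (1 < k)%N) class_number_one_list by [].
have n1 : (1 < n)%N := allP hall n hn.
have [IM _ _ _ _] := Iprops n I n1 hP.
rewrite (CI_LHS n I n1 hP).
exact: (CI_RHS n I S B n1 IM (S_unit n I S hF hS) hS hB).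
Qed.
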